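(* Let $n\ge4$, $x_1,\dots,x_{n-1}>0$, $\gamma,\delta>0$ with $\gamma\ne1\ne\delta$, $x_0=1$, and let $\mathbf{P}$ be the $n\times n$ matrix with entries $p_{ij}=x_{j-1}/x_{i-1}$ except $p_{12}=\delta x_1$, $p_{21}=1/(\delta x_1)$, $p_{13}=\gamma x_2$, $p_{31}=1/(\gamma x_2)$. Let $\mathbf{w}^{EM}$ be the principal right eigenvector of $\mathbf{P}$. If $\gamma,\delta<1$, then $w_1^{EM}/w_i^{EM}<x_{i-1}$ for $i=4,\dots,n$.
   Context: The principal right eigenvector is the positive (Perron) eigenvector belonging to the largest eigenvalue. *)

(* Defs.v *)
From mathcomp Require Import all_boot all_order all_algebra.
Set Implicit Arguments. Unset Strict Implicit. Unset Printing Implicit Defensive.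
Import Order.TTheory GRing.Theory Num.Theory.
Local Open Scope ring_scope.

(* Indices are 0-based: row/column i : 'I_n corresponds to the paper's i+1.
   x : nat -> R, with x 0 = 1 imposed as a hypothesis; the paper's
   p_{ij} = x_{j-1}/x_{i-1} becomes entry (i,j) = x j / x i. *)
Definition Pmat (R : realFieldType) (n : nat) (x : nat -> R) (gamma delta : R)
  : 'M[R]_n :=
  \matrix_(i < n, j < n)
    if (i == 0%N :> nat) && (j == 1%N :> nat) then delta * x 1%N
    else if (i == 1%N :> nat) && (j == 0%N :> nat) then (delta * x 1%N)^-1
    else if (i == 0%N :> nat) && (j == 2%N :> nat) then gamma * x 2%N
    else if (i == 2%N :> nat) && (j == 0%N :> nat) then (gamma * x 2%N)^-1
    else x j / x i.

Definition principal_right_eigenvector (R : realFieldType) (n : nat)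
  (P : 'M[R]_n) (w : 'cV[R]_n) : Prop :=
  (forall i, 0 < w i 0) /\
  exists lambda : R, P *m w = lambda *: w /\
    (forall mu : R, eigenvalue P mu -> mu <= lambda).

(* Main.v *)
Require Import Defs.
From mathcomp Require Import all_boot all_order all_algebra.
From mathcomp Require Import ring lra.
Import Order.TTheory GRing.Theory Num.Theory.
Local Open Scope ring_scope.

Theorem mainTheorem8 (R : realFieldType) (n : nat) (x : nat -> R)
  (gamma delta : R) (w : 'cV[R]_n) :
  (4 <= n)%N ->
  x 0%N = 1 ->
  (forall k : nat, (1 <= k < n)%N -> 0 < x k) ->
  0 < gamma -> 0 < delta -> gamma != 1 -> delta != 1 ->
  principal_right_eigenvector (Pmat n x gamma delta) w ->
  gamma < 1 -> delta < 1 ->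
  forall i j : 'I_n, (j == 0%N :> nat) -> (3 <= i)%N ->
    w j 0 / w i 0 < x i.
Proof.
move=> n4 x0 xpos gpos dpos _ _ [wpos [l [Hl _]]] g1 d1 i j /eqP j0 i3.
have xp : forall k : 'I_n, 0 < x k.
  move=> k; case: (posnP k) => [->|kp]; first by rewrite x0 ltr01.
  by apply: xpos; rewrite kp ltn_ord.
set S := \sum_(k < n) x k * w k 0.
have Spos : 0 < S.
  rewrite /S (bigD1 i) //=.
  have := xp i; have := wpos i.
  have : 0 <= \sum_(k < n | k != i) x k * w k 0.
    by apply: sumr_ge0 => k _; rewrite mulr_ge0 // ltW.
  move=> h1 h2 h3; nra.
have Ei : l * w i 0 * x i = S.
  have := congr1 (fun M : 'M[R]_(n,1) => M i 0) Hl; rewrite !mxE => E.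
  rewrite -E mulr_suml /S; apply: eq_bigr => k _; rewrite ?mxE.
  have -> : (nat_of_ord i == 0%N) = false by apply/eqP => h; rewrite h in i3.
  have -> : (nat_of_ord i == 1%N) = false by apply/eqP => h; rewrite h in i3.
  have -> : (nat_of_ord i == 2%N) = false by apply/eqP => h; rewrite h in i3.
  rewrite /=; have := xp i; rewrite lt0r => /andP[xi0 _]; field.
  by [].
have E0 : \sum_(k < n) Pmat n x gamma delta j k * w k 0 = l * w j 0.
  by have := congr1 (fun M : 'M[R]_(n,1) => M j 0) Hl; rewrite !mxE.
have o1 : (1 < n)%N by apply: leq_trans n4.
have Dpos : 0 < \sum_(k < n) (x k * w k 0 - Pmat n x gamma delta j k * w k 0).
  rewrite (bigD1 (Ordinal o1)) //= mxE j0 /=.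
  have := xp (Ordinal o1); have := wpos (Ordinal o1) => /= h1 h2.
  have : 0 <= \sum_(k < n | k != Ordinal o1)
     (x k * w k 0 - Pmat n x gamma delta j k * w k 0).
    apply: sumr_ge0 => k kn1; rewrite mxE j0 /=.
    have k1 : (nat_of_ord k == 1%N) = false.
      by apply/eqP => h; move: kn1; rewrite -(inj_eq val_inj) /= h.
    rewrite k1 /=.
    case: ifP => k2.
      rewrite (eqP k2); have := xp k; have := wpos k; rewrite (eqP k2) => h3 h4.
      rewrite -mulrA -{1}(mul1r (x 2%N * _)) -mulrBl.
      by apply: mulr_ge0; [rewrite subr_ge0 ltW | rewrite mulr_ge0 // ltW].
    by rewrite x0 divr1 subrr.
  move=> h3; rewrite -mulrA -{1}(mul1r (x 1%N * _)) -mulrBl.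
  have : 0 < (1 - delta) * (x 1%N * w (Ordinal o1) 0).
    by rewrite mulr_gt0 // ?subr_gt0 // mulr_gt0.
  lra.
move: Dpos; rewrite sumrB E0 -/S => Dpos.
have := xp i; have := wpos i; have := wpos j => hj hi hx.
rewrite ltr_pdivrMr //.
have lpos : 0 < l.
  have hp : 0 < w i 0 * x i by rewrite mulr_gt0.
  rewrite -Ei -mulrA in Spos; by rewrite pmulr_lgt0 in Spos.
rewrite -Ei in Dpos; nra.
Qed.
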